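(* If $\{a_n\}_{n\ge0}$ is a pm sequence, then for every $n\ge0$ the polynomial $\sum_{j=0}^{2n} a_j x^{j}/j!$ takes only nonnegative values for all $x\in\mathbb{R}$.
   Context: A sequence of reals $\{m_n\}_{n\ge0}$ is called a pm (positive moment) sequence if there is a positive Borel measure $\mu$ on $\mathbb{R}$ with finite moments of all orders such that $m_n=\int x^n\,\mu(dx)$ for all $n\ge0$. *)

(* Defs.v *)
From HB Require Import structures.
From mathcomp Require Import all_boot all_order all_algebra.
From mathcomp Require Import all_classical all_reals all_analysis.
Set Implicit Arguments. Unset Strict Implicit. Unset Printing Implicit Defensive.
Import Order.TTheory GRing.Theory Num.Theory.
Local Open Scope ring_scope.
Local Open Scope classical_set_scope.

(* A positive moment (pm) sequence: there is a (nonnegative) measure mu on the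
   Borel sets of R (the canonical measurable structure on a realType) with
   finite moments of all orders (x^n integrable for every n) such that
   m n = \int x^n dmu for every n. *)
Definition pm_seq (R : realType) (m : nat -> R) : Prop :=
  exists mu : {measure set R -> \bar R},
    (forall n : nat, mu.-integrable [set: R] (fun x : R => ((x ^+ n)%R)%:E)) /\
    (forall n : nat, ((m n)%:E = \int[mu]_(x in [set: R]) ((x ^+ n)%R)%:E)%E).

(* Main.v *)
Require Import Defs.
From HB Require Import structures.
From mathcomp Require Import all_boot all_order all_algebra.
From mathcomp Require Import all_classical all_reals all_analysis.
From mathcomp Require Import ring lra.
Import Order.TTheory GRing.Theory Num.Theory.
Local Open Scope ring_scope.

Section S.
Variable R : realType.

Definition E (m : nat) : {poly R} := \poly_(i < m.+1) (i`!%:R)^-1.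

Lemma fact_aux i : ((i.+1)`!%:R : R)^-1 *+ i.+1 = (i`!%:R)^-1.
Proof.
have h1 : (i.+1)%:R != 0 :> R by rewrite pnatr_eq0.
have h2 : (i`!)%:R != 0 :> R by rewrite pnatr_eq0 -lt0n fact_gt0.
rewrite factS natrM -mulr_natr; field.
by rewrite h2 nat1r.

Qed.

Lemma E_deriv m : (E m.+1)^`() = E m.
Proof.
apply/polyP => i; rewrite coef_deriv !coef_poly.
case: ifP => him; rewrite ltnS in him.
  by rewrite him fact_aux.
by rewrite him mul0rn.
Qed.

Lemma E_horner m y : (E m).[y] = \sum_(j < m.+1) y ^+ j / (j`!)%:R.
Proof. by rewrite horner_poly; apply: eq_bigr => j _; rewrite mulrC. Qed.

Lemma E0 m : (E m).[0] = 1.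
Proof.
rewrite E_horner big_ord_recl /= expr0 fact0 invr1 mulr1 big1 ?addr0 // => j _.
by rewrite expr0n /= mul0r.
Qed.

Definition F m (y : R) := (-1) ^+ m * ((E m).[y] - expR y).

Lemma F_is_derive m (y : R) : is_derive y (1:R) (F m.+1) (- F m y).
Proof.
rewrite /F.
apply: is_derive_eq.
by rewrite E_deriv exprS mulN1r scaleNr.
Qed.

Lemma F_ge0 m (y : R) : y <= 0 -> 0 <= F m y.
Proof.
elim: m y => [|m IH] y y0.
  by rewrite /F expr0 mul1r E_horner big_ord1 expr0 fact0 invr1 mulr1 subr_ge0 expR_le1.
have F0 : F m.+1 0 = 0 by rewrite /F E0 expR0 subrr mulr0.
rewrite -F0.
have D x : derivable (F m.+1) x 1 by apply: ex_derive; apply: F_is_derive.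
apply: (@ler0_derive1_nincr _ (F m.+1) y 0) => //.
- move=> x; rewrite in_itv /= => /andP[_ x0].
  rewrite derive1E (@derive_val _ _ _ _ _ _ _ (F_is_derive m x)) oppr_le0.
  by apply: IH; apply: ltW.
- apply: derivable_within_continuous => x _; exact: D.
Qed.

Lemma E_even_ge0 n (y : R) : 0 <= (E (2 * n)).[y].
Proof.
have [y0|y0] := leP 0 y.
  rewrite E_horner; apply: sumr_ge0 => j _.
  by apply: divr_ge0; [exact: exprn_ge0 | exact: ler0n].
have := F_ge0 (2 * n) y (ltW y0 : y <= 0).
rewrite /F -signr_odd oddM andFb expr0 mul1r subr_ge0 => h.
exact: le_trans (expR_ge0 y) h.
Qed.
End S.


Theorem corollary1 (R : realType) (a : nat -> R) :
  pm_seq a ->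
  forall (n : nat) (x : R),
    0 <= \sum_(j < (2 * n).+1) a j * x ^+ j / (j`!)%:R.
Proof.
move=> [mu [hint hmom]] n x.
rewrite -lee_fin -sumEFin.
have -> : (\sum_(j < (2 * n).+1) (a j * x ^+ j / (j`!)%:R)%:E =
   \sum_(j < (2 * n).+1) \int[mu]_(t in [set: R])
       ((x ^+ j / (j`!)%:R)%:E * (t ^+ j)%:E))%E.
  apply: eq_bigr => j _.
  rewrite (integralZl _ (hint j)) //.
  by rewrite -hmom -EFinM; congr (_%:E); rewrite [RHS]mulrC mulrA.
rewrite -(@integral_sum _ _ _ mu _ _ _ (fun (j : 'I_(2 * n).+1) t => ((x ^+ j / (j`!)%:R)%:E * (t ^+ j)%:E)%E)) //; last first.
  by move=> j; apply: integrableZl => //; exact: hint.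
apply: integral_ge0 => t _.
rewrite sumEFin lee_fin.
have := @E_even_ge0 R n (x * t).
rewrite E_horner => h; apply: (le_trans h); rewrite le_eqVlt; apply/orP; left; apply/eqP; apply: eq_bigr => j _.
by rewrite exprMn mulrAC.
Qed.
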